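(* Let $M(s,t)=C s^{-\alpha}(t-s)^{-\beta}$ with $C>0$, $\alpha,\beta\ge 0$ (a local factor). Let $t>0$ and let $\rho\in\mathcal B^-$ be a Bruno sequence with $\rho_n<1/2$ for all $n$. Put $s_n=t\hat\rho_n$. Then the sequence $\big(M(s_{n+1},s_n)\big)_{n\ge0}$ is bounded by a geometric sequence, i.e. there exist constants $K>0$ and $q>0$ with $M(s_{n+1},s_n)\le K q^n$ for all $n$.
   Context: A Bruno sequence is a strictly positive monotone real sequence $a=(a_n)_{n\ge0}$ such that $\sum_{k\ge0}|2^{-k}\log a_k|<+\infty$; its phase is $u_n=|2^{-n}\log a_n|$. $\mathcal B^-$ is the set of Bruno sequences of the form $a_n=e^{-2^nu_n}$, $u_n\ge0$. The Bruno transform of a sequence $a$ is the sequence $\hat a$ with terms $\hat a_n=a_0^{1/2}a_1^{1/2^2}\cdots a_n^{1/2^{n+1}}$; for a Bruno sequence it converges to a strictly positive number. *)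

(* Defs.v *)
From Stdlib Require Import Reals.
From Coquelicot Require Import Coquelicot.
Open Scope R_scope.

Definition monotone_seq (a : nat -> R) : Prop :=
  (forall n, a n <= a (S n)) \/ (forall n, a (S n) <= a n).

Definition Bruno_seq (a : nat -> R) : Prop :=
  (forall n, 0 < a n) /\ monotone_seq a /\
  ex_series (fun k => Rabs (/ 2 ^ k * ln (a k))).

Definition Bruno_minus (a : nat -> R) : Prop :=
  Bruno_seq a /\ exists u : nat -> R,
    forall n, 0 <= u n /\ a n = exp (- (2 ^ n * u n)).

Fixpoint Bruno_transform (a : nat -> R) (n : nat) : R :=
  match n with
  | O => Rpower (a 0%nat) (/ 2)
  | S m => Bruno_transform a m * Rpower (a (S m)) (/ 2 ^ (S (S m)))
  end.

Definition local_factor (C alpha beta s t : R) : R :=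
  C * Rpower s (- alpha) * Rpower (t - s) (- beta).

(* Main.v *)
Require Import Defs.
From Stdlib Require Import Reals Lra.
From Coquelicot Require Import Coquelicot.
Open Scope R_scope.

Lemma exp_INR_mul (n : nat) (x : R) : exp (INR n * x) = exp x ^ n.
Proof.
  induction n as [|n IH].
  - simpl. rewrite Rmult_0_l, exp_0; reflexivity.
  - rewrite S_INR, Rmult_plus_distr_r, Rmult_1_l, exp_plus, IH; simpl; ring.
Qed.

Lemma BT_pos (rho : nat -> R) n : 0 < Bruno_transform rho n.
Proof.
  induction n; simpl; unfold Rpower.
  - apply exp_pos.
  - apply Rmult_lt_0_compat; [exact IHn| apply exp_pos].
Qed.

Lemma BT_ln (rho : nat -> R) n :
  ln (Bruno_transform rho n) = sum_f_R0 (fun k => / 2 ^ k * ln (rho k)) n / 2.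
Proof.
  induction n; simpl; unfold Rpower.
  - rewrite ln_exp; simpl; field.
  - rewrite ln_mult; [| apply BT_pos | apply exp_pos].
    rewrite IHn, ln_exp. simpl. field. apply pow_nonzero. lra.
Qed.

Lemma exp_le_mono x y : x <= y -> exp x <= exp y.
Proof.
  intro H; destruct (Rle_lt_or_eq_dec _ _ H) as [E|E].
  - left; apply exp_increasing; exact E.
  - rewrite E; apply Rle_refl.
Qed.

Lemma ln2_lt2 : ln 2 < 2.
Proof.
  pose proof (exp_ineq1 2 ltac:(apply Rgt_not_eq; lra)).
  assert (H2 : ln 2 < ln (exp 2)) by (apply ln_increasing; lra).
  rewrite ln_exp in H2. exact H2.
Qed.

Theorem lemmaL (C alpha beta t : R) (rho : nat -> R) :
  0 < C -> 0 <= alpha -> 0 <= beta -> 0 < t ->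
  Bruno_minus rho -> (forall n, rho n < / 2) ->
  exists K q : R, 0 < K /\ 0 < q /\
    forall n : nat,
      local_factor C alpha beta (t * Bruno_transform rho (S n))
                                (t * Bruno_transform rho n) <= K * q ^ n.
Proof.
  intros HC Ha Hb Ht [[Hpos [_ [Sm HS]]] _] Hhalf.
  set (h := Bruno_transform rho).
  assert (Hsum : forall n, sum_f_R0 (fun k => Rabs (/ 2 ^ k * ln (rho k))) n <= Sm).
  { intro n. apply growing_ineq.
    - intro m. rewrite tech5.
      match goal with |- _ <= _ + ?x => assert (0 <= x) by apply Rabs_pos end; lra.
    - apply is_lim_seq_Reals.
      eapply is_lim_seq_ext; [intro m; apply sum_n_Reals|]. exact HS. }
  assert (Hlow : forall n, - (Sm / 2) <= ln (h n)).
  { intro n. unfold h. rewrite BT_ln.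
    pose proof (sum_f_R0_triangle (fun k => / 2 ^ k * ln (rho k)) n).
    pose proof (Hsum n).
    pose proof (Rabs_Ropp (sum_f_R0 (fun k => / 2 ^ k * ln (rho k)) n)).
    pose proof (Rle_abs (- sum_f_R0 (fun k => / 2 ^ k * ln (rho k)) n)). lra. }
  set (A := t * exp (- (Sm / 2)) * ln 2 / 8).
  assert (Hln2 : 0 < ln 2) by (rewrite <- ln_1; apply ln_increasing; lra).
  assert (HA : 0 < A).
  { unfold A. pose proof (exp_pos (- (Sm/2))).
    apply Rmult_lt_0_compat; [|lra].
    apply Rmult_lt_0_compat; [apply Rmult_lt_0_compat|]; lra. }
  assert (Hdiff : forall n, A * (/ 2) ^ n <= t * h n - t * h (S n)).
  { intro n.
    assert (Hh : h (S n) = h n * exp (/ 2 ^ (S (S n)) * ln (rho (S n)))) by reflexivity.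
    set (y := ln 2 / 2 ^ (S (S n))).
    assert (H2p : 0 < 2 ^ (S (S n))) by (apply pow_lt; lra).
    assert (Hy : 0 < y) by (unfold y; apply Rdiv_lt_0_compat; lra).
    assert (Hy1 : y <= 1).
    { unfold y. simpl. pose proof (pow_le 2 n ltac:(lra)).
      assert (1 <= 2 ^ n) by (apply pow_R1_Rle; lra).
      apply Rcomplements.Rle_div_l; [simpl in H2p; lra|]. pose proof ln2_lt2. nra. }
    assert (Hlr : ln (rho (S n)) < - ln 2).
    { rewrite <- ln_Rinv by lra. apply ln_increasing; [apply Hpos| apply Hhalf]. }
    assert (Hr : exp (/ 2 ^ (S (S n)) * ln (rho (S n))) <= exp (- y)).
    { apply exp_le_3 || idtac.
      left; apply exp_increasing. unfold y.
      assert (0 < / 2 ^ (S (S n))) by (apply Rinv_0_lt_compat; lra).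
      unfold Rdiv. nra. }
    assert (Hey : exp (- y) * (1 + y) <= 1).
    { pose proof (exp_ineq1 y ltac:(apply Rgt_not_eq; lra)).
      assert (Ee : exp (- y) * exp y = 1) by (rewrite <- exp_plus; replace (- y + y) with 0 by ring; apply exp_0).
      pose proof (exp_pos (-y)).
      assert (exp (- y) * (1 + y) <= exp (- y) * exp y) by (apply Rmult_le_compat_l; lra). lra. }
    assert (Hry : 1 - exp (- y) >= y / 2).
    { pose proof (exp_pos (-y)).
      assert (Hq : (1 - exp (- y) - y / 2) * (1 + y) >= 0).
      { assert (0 <= y * (1 - y)) by (apply Rmult_le_pos; lra). nra. }
      destruct (Rle_or_lt 0 (1 - exp (- y) - y / 2)) as [Q|Q]; [lra|].
      assert ((1 - exp (- y) - y / 2) * (1 + y) < 0) by (apply Rmult_neg_pos; lra). lra. }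
    assert (Hhn : exp (- (Sm / 2)) <= h n).
    { rewrite <- (exp_ln (h n)) by apply BT_pos.
      destruct (Rle_lt_or_eq_dec _ _ (Hlow n)) as [E|E].
      - left; apply exp_increasing; exact E.
      - rewrite E; lra. }
    rewrite Hh.
    assert (Hpw : (/2) ^ n = 4 * / 2 ^ (S (S n))).
    { rewrite pow_inv. simpl. field. apply pow_nonzero; lra. }
    assert (Hyv : y / 2 = ln 2 / 8 * 4 * / 2 ^ (S (S n))).
    { unfold y. field. apply pow_nonzero; lra. }
    assert (E1 : A * (/2) ^ n = t * exp (- (Sm / 2)) * (y / 2)).
    { rewrite Hpw, Hyv. unfold A. field. apply pow_nonzero; lra. }
    rewrite E1.
    pose proof (exp_pos (- (Sm / 2))).
    assert (0 <= 1 - exp (/ 2 ^ (S (S n)) * ln (rho (S n)))) by nra.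
    assert (exp (- (Sm / 2)) * (y / 2) <= h n * (1 - exp (/ 2 ^ (S (S n)) * ln (rho (S n))))).
    { apply Rmult_le_compat; lra. }
    nra. }
  exists (C * exp (- alpha * (ln t - Sm / 2)) * exp (- beta * ln A)), (exp (beta * ln 2)).
  split; [| split; [apply exp_pos|]].
  { apply Rmult_lt_0_compat; [apply Rmult_lt_0_compat|]; auto using exp_pos. }
  intro n. unfold local_factor, Rpower.
  pose proof (BT_pos rho (S n)) as P1.
  pose proof (BT_pos rho n) as P0.
  fold h in P1, P0 |- *.
  assert (HAn : 0 < A * (/2) ^ n) by (apply Rmult_lt_0_compat; [lra| apply pow_lt; lra]).
  pose proof (Hdiff n) as Dn.
  assert (E1 : exp (- alpha * ln (t * h (S n))) <= exp (- alpha * (ln t - Sm / 2))).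
  { rewrite ln_mult by lra. pose proof (Hlow (S n)).
    apply exp_le_mono. nra. }
  assert (E2 : exp (- beta * ln (t * h n - t * h (S n))) <= exp (- beta * ln (A * (/2) ^ n))).
  { assert (ln (A * (/2) ^ n) <= ln (t * h n - t * h (S n))).
    { destruct (Rle_lt_or_eq_dec _ _ Dn) as [D|D].
      - left; apply ln_increasing; lra.
      - rewrite D; lra. }
    apply exp_le_mono. nra. }
  assert (E3 : exp (- beta * ln (A * (/2) ^ n)) = exp (- beta * ln A) * exp (beta * ln 2) ^ n).
  { rewrite ln_mult by (try lra; apply pow_lt; lra).
    rewrite ln_pow by lra. rewrite ln_Rinv by lra.
    rewrite <- exp_INR_mul, <- exp_plus. f_equal. ring. }
  rewrite E3 in E2.
  pose proof (exp_pos (- alpha * ln (t * h (S n)))).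
  pose proof (exp_pos (- beta * ln (t * h n - t * h (S n)))).
  pose proof (exp_pos (- alpha * (ln t - Sm / 2))).
  assert (C * exp (- alpha * ln (t * h (S n))) <= C * exp (- alpha * (ln t - Sm / 2))) by nra.
  replace (C * exp (- alpha * (ln t - Sm / 2)) * exp (- beta * ln A) * exp (beta * ln 2) ^ n)
    with (C * exp (- alpha * (ln t - Sm / 2)) * (exp (- beta * ln A) * exp (beta * ln 2) ^ n)) by ring.
  apply Rmult_le_compat; try lra.
  apply Rmult_le_pos; lra.
Qed.
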